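(* Let $G$ be a connected $r$-regular finite simple graph on $n$ vertices, and let the spectrum of its adjacency matrix $A_G$ be $r,\lambda_2,\lambda_3,\dots,\lambda_n$ (listed with multiplicity, not necessarily distinct). Let $m$ be the maximum multiplicity of a value in the list $\lambda_2,\dots,\lambda_n$. Then $\mathrm{mur}(G)=n-(m+1)$.
   Context: For a finite simple undirected graph $G$ on vertices $v_1,\dots,v_n$, let $A_G$ be its $(0,1)$-adjacency matrix, $D_G=\mathrm{diag}(d_1,\dots,d_n)$ with $d_i$ the degree of $v_i$, $I$ the $n\times n$ identity matrix and $J$ the $n\times n$ all-ones matrix. A universal adjacency matrix of $G$ is any matrix $\alpha A_G+\beta I+\gamma J+\delta D_G$ with real scalars $\alpha,\beta,\gamma,\delta$ and $\alpha\neq 0$. The minimum universal rank $\mathrm{mur}(G)$ is the minimum rank over all universal adjacency matrices of $G$. *)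

(* Defs.v *)
From HB Require Import structures.
From mathcomp Require Import all_boot all_order all_algebra.
From mathcomp Require Import reals.
Set Implicit Arguments. Unset Strict Implicit. Unset Printing Implicit Defensive.
Import Order.TTheory GRing.Theory Num.Theory.
Local Open Scope ring_scope.

Definition simple_graph (n : nat) (e : rel 'I_n) : Prop :=
  symmetric e /\ irreflexive e.

Definition deg (n : nat) (e : rel 'I_n) (i : 'I_n) : nat := #|[set j | e i j]|.

Definition regular (n : nat) (e : rel 'I_n) (r : nat) : Prop :=
  forall i, deg e i = r.

Definition connected_graph (n : nat) (e : rel 'I_n) : Prop :=
  forall i j : 'I_n, connect e i j.

Definition adjmx (R : realType) (n : nat) (e : rel 'I_n) : 'M[R]_n :=
  \matrix_(i, j) (e i j)%:R.

Definition degmx (R : realType) (n : nat) (e : rel 'I_n) : 'M[R]_n :=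
  \matrix_(i, j) (if i == j then (deg e i)%:R else 0).

Definition allones (R : realType) (n : nat) : 'M[R]_n := const_mx 1.

Definition univ_adj (R : realType) (n : nat) (e : rel 'I_n) (a b c d : R)
  : 'M[R]_n :=
  a *: adjmx R e + b *: 1%:M + c *: allones R n + d *: degmx R e.

Definition is_mur (R : realType) (n : nat) (e : rel 'I_n) (k : nat) : Prop :=
  (exists a b c d : R, a != 0 /\ \rank (univ_adj e a b c d) = k) /\
  (forall a b c d : R, a != 0 -> (k <= \rank (univ_adj e a b c d))%N).

(* Main.v *)
Require Import Defs.
From HB Require Import structures.
From mathcomp Require Import all_boot all_order all_algebra.
From mathcomp Require Import reals zify ring.
Import Order.TTheory GRing.Theory Num.Theory.
Local Open Scope ring_scope.

Set Implicit Arguments. Unset Strict Implicit. Unset Printing Implicit Defensive.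


Section GA.
Variable F : fieldType.
Lemma kermx_row_eq n (B : 'M[F]_n) (i : 'I_n) :
  (\rank B <= i)%N -> row i (kermx B) = row i (invmx (col_ebase B)).
Proof.
move=> Hi; rewrite /kermx row_mul.
have -> : row i (copid_mx (\rank B) : 'M[F]_n) = row i 1%:M.
  apply/rowP => j; rewrite /copid_mx !mxE.
  rewrite (leqNgt (\rank B) i) in Hi. rewrite (negbTE Hi) andbF subr0.
  done.
by rewrite -row_mul mul1mx.
Qed.
Lemma prod_if_ge (p : {poly F}) r n :
  \prod_(i < n) (if (r <= i)%N then p else 1) = p ^+ (n - r).
Proof.
elim: n => [|n IH]; first by rewrite big_ord0 sub0n expr0.
rewrite big_ord_recr /= IH.
case: (leqP r n) => H.
  by rewrite subSn // exprSr.
have h1 : (n - r = 0)%N by apply/eqP; rewrite subn_eq0 ltnW.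
have h2 : (n.+1 - r = 0)%N by apply/eqP; rewrite subn_eq0.
by rewrite h1 h2 mulr1.
Qed.
Lemma GA n (A : 'M[F]_n) x :
  ('X - x%:P) ^+ (n - \rank (A - x%:M)) %| char_poly A.
Proof.
set B := A - x%:M; set r := \rank B.
set Q := invmx (col_ebase B).
have QU : Q \in unitmx by rewrite unitmx_inv col_ebase_unit.
set C := Q *m B *m invmx Q.
have C0 : forall (i j : 'I_n), (r <= i)%N -> C i j = 0.
  move=> i j Hi.
  have : row i (Q *m B) = 0.
    by rewrite row_mul -kermx_row_eq // -row_mul mulmx_ker row0.
  move=> H; have := congr1 (fun M : 'rV_n => (M *m invmx Q) 0 j) H.
  by rewrite -row_mul mul0mx !mxE.
set P := map_mx polyC Q; set Pi := map_mx polyC (invmx Q).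
have PPi : P *m Pi = 1%:M by rewrite -map_mxM mulmxV // map_mx1.
set L := ('X - x%:P)%:M - map_mx polyC C.
have cB : char_poly_mx A = ('X - x%:P)%:M - map_mx polyC B.
  rewrite /char_poly_mx /B map_mxB map_scalar_mx /= (raddfB (@scalar_mx _ n)).
  by rewrite opprB addrA subrK.
have HL : L = P *m char_poly_mx A *m Pi.
  rewrite cB mulmxBr mulmxBl mul_mx_scalar -scalemxAl PPi scalemx1.
  by rewrite /L /C /P /Pi !map_mxM.
have detL : \det L = char_poly A.
  by rewrite HL !det_mulmx mulrAC -det_mulmx PPi det1 mul1r.
set dv : 'rV[{poly F}]_n := \row_i (if (r <= i)%N then 'X - x%:P else 1).
set N : 'M[{poly F}]_n := \matrix_(i, j) (if (r <= i)%N then (i == j)%:R else L i j).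
clearbody C.
have LDN : L = diag_mx dv *m N.
  apply/matrixP => i j; rewrite mul_diag_mx !mxE.
  case: ifP => Hi; last by rewrite mul1r.
  rewrite C0 // rmorph0 subr0.
  by case: (i == j); rewrite ?mulr1 ?mulr0.
rewrite -detL LDN det_mulmx det_diag.
have -> : \prod_i dv 0 i = ('X - x%:P) ^+ (n - r).
  rewrite -prod_if_ge; apply: eq_bigr => i _; by rewrite mxE.
exact: dvdp_mulr.
Qed.
End GA.


Section LA.
Variable F : fieldType.

Lemma GA_count n (A : 'M[F]_n) (s : seq F) x :
  char_poly A = \prod_(y <- s) ('X - y%:P) ->
  (n - \rank (A - x%:M)%R <= count_mem x s)%N.
Proof.
move=> Hc; rewrite -(mu_prod_XsubC x s) -Hc mup_geq ?GA //.
exact: monic_neq0 (char_poly_monic A).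
Qed.

Lemma ker_rank_le m p q (X : 'M[F]_(m, p)) (Y : 'M[F]_(m, q)) :
  (forall v : 'rV_m, v *m X = 0 -> v *m Y = 0) -> (\rank Y <= \rank X)%N.
Proof.
move=> H.
have sub : (kermx X <= kermx Y)%MS.
  apply/sub_kermxP; apply/row_matrixP => i; rewrite row_mul row0.
  by apply: H; rewrite -row_mul mulmx_ker row0.
have := mxrankS sub; rewrite !mxrank_ker.
have := rank_leq_row Y; have := rank_leq_row X; lia.
Qed.

Lemma kerplus n (X Y : 'M[F]_n) (u : 'rV[F]_n) :
  (forall v : 'rV_n, v *m Y = 0 -> v *m X = 0) -> u *m X = 0 -> u *m Y != 0 ->
  ((n - \rank Y) + 1 <= n - \rank X)%N.
Proof.
move=> H uX uY.
have u0 : u != 0 by apply: contraNneq uY => ->; rewrite mul0mx.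
have s1 : (kermx Y <= kermx X)%MS.
  apply/sub_kermxP; apply/row_matrixP => i; rewrite row_mul row0.
  by apply: H; rewrite -row_mul mulmx_ker row0.
have s2 : (u <= kermx X)%MS by apply/sub_kermxP.
have dis : (kermx Y :&: u)%MS = 0.
  apply/eqP/rowV0P => v; rewrite sub_capmx => /andP[vK /sub_rVP [k vk]].
  move/sub_kermxP: vK; rewrite vk -scalemxAl => /eqP.
  rewrite scaler_eq0 (negbTE uY) orbF => /eqP ->.
  by rewrite scale0r.
have sub : (kermx Y + u <= kermx X)%MS by rewrite addsmx_sub s1 s2.
have := mxrankS sub.
by rewrite mxrank_disjoint_sum // rank_rV u0 !mxrank_ker.
Qed.

End LA.

Section Sym.
Variable R : realFieldType.

Lemma ker2 n (B : 'M[R]_n) (v : 'rV_n) :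
  B^T = B -> v *m (B *m B) = 0 -> v *m B = 0.
Proof.
move=> hB H; set w := v *m B.
have ww : w *m w^T = 0.
  by rewrite /w trmx_mul hB mulmxA -(mulmxA v) H mul0mx.
have S : \sum_j w 0 j * w 0 j = 0.
  have := congr1 (fun M : 'M_1 => M 0 0) ww; rewrite !mxE => h; apply: etrans h.
  by apply: eq_bigr => j _; rewrite [w^T _ _]mxE.
apply/rowP => j; rewrite [RHS]mxE.
have := psumr_eq0P (fun i _ => (eq_ind _ (fun t => 0 <= t) (sqr_ge0 (w 0 i)) _ (expr2 _))) S (i := j) isT.
by move/eqP; rewrite mulf_eq0 orbb => /eqP.
Qed.
End Sym.


Section Sym2.
Variable R : realFieldType.

Lemma mulv_mul n (v : 'rV[R]_n) (X Y : 'M[R]_n) : v *m (X * Y) = v *m X *m Y.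
Proof. by rewrite -mulmxE mulmxA. Qed.

Lemma pow_ker n (B : 'M[R]_n) : B^T = B ->
  forall c (v : 'rV_n), v *m B ^+ c.+1 = 0 -> v *m B = 0.
Proof.
move=> hB; elim=> [|c IH] v; first by rewrite expr1.
move=> h; apply: IH.
have := ker2 (v := v *m B ^+ c) hB.
have e1 : v *m B ^+ c.+2 = v *m B ^+ c *m (B *m B).
  by rewrite !exprSr !mulv_mul ?mulmxA.
have e2 : v *m B ^+ c.+1 = v *m B ^+ c *m B by rewrite exprSr mulv_mul.
by rewrite e2; apply; rewrite -e1.
Qed.

Lemma rank_pow n (B : 'M[R]_n) c : B^T = B -> \rank (B ^+ c.+1) = \rank B.
Proof.
move=> hB; apply/eqP; rewrite eqn_leq; apply/andP; split.
  apply: ker_rank_le => v h.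
  by rewrite exprS mulv_mul h mul0mx.
by apply: ker_rank_le => v; apply: pow_ker.
Qed.

Lemma symB n (A : 'M[R]_n) x : A^T = A -> (A - x%:M)^T = A - x%:M.
Proof. by move=> hA; rewrite linearB /= hA tr_scalar_mx. Qed.

End Sym2.


Section SYM.
Variable R : realFieldType.

Lemma sum_count_undup (s : seq R) :
  (\sum_(y <- undup s) count_mem y s)%N = size s.
Proof.
have := big_undup_iterop_count addn s xpredT (fun _ => 1%N).
rewrite sum1_size => <-; apply: eq_bigr => y _.
by rewrite Monoid.iteropE iter_addn_0 mul1n.
Qed.

Lemma nat_aux a b n : (a <= n)%N -> (n - a <= b)%N -> (b <= n - a)%N -> a = (n - b)%N.
Proof. lia. Qed.

Lemma SYM n (A : 'M[R]_n) (s : seq R) : A^T = A ->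
  char_poly A = \prod_(y <- s) ('X - y%:P) ->
  forall x, \rank (A - x%:M) = (n - count_mem x s)%N.
Proof.
move=> hA Hc.
have hsize : size s = n.
  by have := size_char_poly A; rewrite Hc size_prod_XsubC => -[].
have le x : (n - \rank (A - x%:M)%R <= count_mem x s)%N by apply: GA_count.
suff ge : forall x, x \in s -> (count_mem x s <= n - \rank (A - x%:M)%R)%N.
  move=> x; case: (boolP (x \in s)) => xs.
    exact: nat_aux (rank_leq_row _) (le x) (ge x xs).
  have := le x; rewrite (count_memPn xs) => h.
  exact: nat_aux (rank_leq_row _) h (leq0n _).
case: n A hA Hc hsize le => [|n] A hA Hc hsize le.
  by case: s hsize {Hc le}.
set u := undup s; set k := size u.
pose p_ (i : 'I_k) := ('X - (u`_i)%:P) ^+ count_mem (u`_i) s.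
have hprod : char_poly A = \prod_(i < k) p_ i.
  by rewrite Hc -prodr_undup_exp_count -/u (big_nth 0) big_mkord.
have uu : uniq u by apply: undup_uniq.
have hcop : {in predT &, forall i j, j != i -> coprimep (p_ i) (p_ j)}.
  move=> i j _ _ nji; rewrite /p_ coprimep_expl // coprimep_expr //.
  rewrite coprimep_XsubC root_XsubC nth_uniq //.
have hfull : \rank (kermxpoly A (char_poly A)) = n.+1.
  by rewrite (kermxpoly_min (mxminpoly_dvd_char A)) mxrank1.
have hsum : \rank (kermxpoly A (\prod_(i < k) p_ i)) =
            (\sum_(i < k) \rank (kermxpoly A (p_ i)))%N.
  rewrite (kermxpoly_prod A hcop).
  by have := mxdirect_sum_kermx A hcop; rewrite mxdirectE /= => /eqP.
have hterm : forall i : 'I_k,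
  \rank (kermxpoly A (p_ i)) = (n.+1 - \rank (A - (u`_i)%:M)%R)%N.
  move=> i.
  have cnt : (0 < count_mem (u`_i)%R s)%N.
    by rewrite -has_count has_pred1 -mem_undup mem_nth.
  rewrite /kermxpoly /p_.
  case: (count_mem (u`_i) s) cnt => [//|c] _.
  rewrite rmorphXn /= rmorphB /= horner_mx_X horner_mx_C mxrank_ker rank_pow //.
  exact: symB.
have hcnt : (\sum_(i < k) count_mem (u`_i)%R s)%N = n.+1.
  by rewrite -hsize -sum_count_undup -/u (big_nth 0) big_mkord.
have eqsum : (\sum_(i < k) (n.+1 - \rank (A - (u`_i)%:M)%R))%N = n.+1.
  rewrite hprod hsum in hfull; rewrite -[RHS]hfull; apply: eq_bigr => i _; by rewrite hterm.
move=> x xs.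
have xu : x \in u by rewrite mem_undup.
have ik : (index x u < k)%N by rewrite index_mem.
pose i := Ordinal ik.
have ui : (u`_i)%R = x by apply: nth_index.
rewrite leqNgt; apply/negP => hlt.
have : (\sum_(j < k) (n.+1 - \rank (A - (u`_j)%:M)%R) <
        \sum_(j < k) count_mem (u`_j)%R s)%N.
  rewrite (bigD1 i) //= [X in (_ < X)%N](bigD1 i) //= ui.
  rewrite -addSn; apply: leq_add => //.
  by apply: leq_sum => j _; apply: le.
by rewrite eqsum hcnt ltnn.
Qed.
End SYM.


Section Graph.
Variables (R : realType) (n : nat) (e : rel 'I_n) (r : nat).

Definition one : 'rV[R]_n := const_mx 1.

Lemma adj_sym : simple_graph e -> (adjmx R e)^T = adjmx R e.
Proof.
by move=> [se _]; apply/matrixP => i j; rewrite !mxE se.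
Qed.

Lemma deg_eq : regular e r -> degmx R e = (r%:R)%:M.
Proof.
move=> hr; apply/matrixP => i j; rewrite !mxE.
by case: eqP => [->|_]; rewrite ?hr ?mulr1n ?mulr0n.
Qed.

Lemma sum_bool_deg (i : 'I_n) : \sum_j ((e i j)%:R : R) = (deg e i)%:R.
Proof.
rewrite /deg -sum1_card natr_sum big_mkcond /=.
rewrite [RHS]big_mkcond /=; apply: eq_bigr => j _; rewrite inE; by case: (e i j).
Qed.

Lemma oneA : simple_graph e -> regular e r -> one *m adjmx R e = r%:R *: one.
Proof.
move=> [se _] hr; apply/rowP => j; rewrite !mxE -(hr j) -sum_bool_deg.
rewrite mulr1; apply: eq_bigr => i _; by rewrite !mxE mul1r se.
Qed.

Lemma Aone : simple_graph e -> regular e r -> adjmx R e *m one^T = r%:R *: one^T.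
Proof.
move=> sg hr; rewrite -{1}(adj_sym sg) -trmx_mul oneA //.
by rewrite linearZ.
Qed.

Lemma J_eq : allones R n = one^T *m one.
Proof.
apply/matrixP => i j; rewrite !mxE big_ord1 !mxE.
by rewrite mulr1.
Qed.

Lemma one_oneT : one *m one^T = (n%:R)%:M.
Proof.
apply/matrixP => i j; rewrite !mxE (ord1 i) (ord1 j) /=.
under eq_bigr do rewrite !mxE mulr1.
by rewrite sumr_const card_ord.
Qed.

Lemma oneJ : one *m allones R n = n%:R *: one.
Proof. by rewrite J_eq mulmxA one_oneT mul_scalar_mx. Qed.

Lemma JoneT : allones R n *m one^T = n%:R *: one^T.
Proof. by rewrite J_eq -mulmxA one_oneT mul_mx_scalar. Qed.

Lemma univ_eq a b c d mu : regular e r -> a * mu = - (b + d * r%:R) ->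
  univ_adj e a b c d = a *: (adjmx R e - mu%:M) + c *: allones R n.
Proof.
move=> hr hmu; rewrite /univ_adj deg_eq //.
apply/matrixP => i j; rewrite !mxE.
case: (i == j) => /=; last by rewrite !mulr0n !mulr0 !addr0 subr0.
rewrite !mulr1n mulrBr hmu.
by rewrite mulr1; ring.
Qed.

End Graph.


Lemma exists_max (T : eqType) (F : T -> nat) (s : seq T) : s != [::] ->
  exists2 y, y \in s & (\max_(x <- s) F x)%N = F y.
Proof.
elim: s => [//|a s IH] _; rewrite big_cons.
case: (eqVneq s [::]) => [->|sne].
  by exists a; rewrite ?mem_head // big_nil maxn0.
have [y ys ->] := IH sne.
case: (leqP (F y) (F a)) => h.
  by exists a; rewrite ?mem_head //; apply/maxn_idPl.
by exists y; rewrite ?inE ?ys ?orbT //; apply/maxn_idPr/ltnW.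
Qed.

Lemma count_le_max (T : eqType) (ls : seq T) x :
  (count_mem x ls <= \max_(y <- ls) count_mem y ls)%N.
Proof.
case: (boolP (x \in ls)) => xs; first exact: (@leq_bigmax_seq _ ls xpredT (fun y => count_mem y ls) x xs isT).
by rewrite (count_memPn xs).
Qed.

Lemma natL1 (n m rk cnt : nat) : (rk <= n)%N -> (cnt <= m)%N -> (cnt.+1 <= n)%N ->
  (n - rk + 1 <= n - (n - cnt.+1))%N -> (n - (m + 1) <= rk)%N.
Proof. lia. Qed.

Lemma natL2 (n m rk rc cnt : nat) : (cnt <= m)%N -> (rc <= 1)%N ->
  (n - cnt <= rk + rc)%N -> (n - (m + 1) <= rk)%N.
Proof. lia. Qed.

Lemma natL3 (n rk cnt : nat) : (rk <= n)%N -> (cnt <= n)%N ->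
  (n - (n - cnt) + 1 <= n - rk)%N -> (rk <= n - (cnt + 1))%N.
Proof. lia. Qed.

Unset Implicit Arguments.
Theorem theorem11 (R : realType) (n : nat) (e : rel 'I_n) (r : nat)
    (ls : seq R) :
  simple_graph e -> connected_graph e -> regular e r ->
  char_poly (adjmx R e) = \prod_(x <- r%:R :: ls) ('X - x%:P) ->
  is_mur R e (n - ((\max_(x <- ls) count_mem x ls) + 1))%N.
Proof.
move=> sg _ hr Hc.
have hA := adj_sym R sg.
have EIG := SYM hA Hc.
have hsize : size (r%:R :: ls) = n.
  by have := size_char_poly (adjmx R e); rewrite Hc size_prod_XsubC => -[].
set m := (\max_(x <- ls) count_mem x ls)%N.
have hm : forall x, (count_mem x ls <= m)%N by move=> x; apply: count_le_max.
have n0 : (0 < n)%N by rewrite -hsize.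
have nR : (n%:R : R) != 0 by rewrite pnatr_eq0 -lt0n.
have one0 : one R n != 0.
  apply/negP => /eqP/rowP/(_ (Ordinal n0)); rewrite !mxE => /eqP.
  by rewrite oner_eq0.
have cntle : forall x, (count_mem x (r%:R :: ls) <= n)%N.
  by move=> x; rewrite -hsize count_size.
set A := adjmx R e.
set J := allones R n.
set o := one R n.
have AoT : A *m o^T = r%:R *: o^T by apply: Aone.
have oA : o *m A = r%:R *: o by apply: oneA.
have oJ : o *m J = n%:R *: o by apply: oneJ.
have JoT : J *m o^T = n%:R *: o^T by apply: JoneT.
have rkJ : (\rank J <= 1)%N.
  rewrite /J J_eq; apply: leq_trans (mxrankM_maxl _ _) _; exact: rank_leq_col.
have lower : forall a b c d : R, a != 0 ->
    (n - (m + 1) <= \rank (univ_adj e a b c d))%N.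
  move=> a b c d a0.
  set mu := - (b + d * r%:R) / a.
  have hmu : a * mu = - (b + d * r%:R) by rewrite /mu mulrC divfK.
  rewrite (univ_eq c hr hmu) -/A -/J.
  case: (eqVneq mu r%:R) => [->|hmur].
    case: (eqVneq c 0) => [->|c0].
      rewrite scale0r addr0 mxrank_scale_nz // EIG /= eqxx add1n.
      by apply: leq_sub2l; rewrite addn1 ltnS; apply: hm.
    have MoT : (a *: (A - r%:R%:M) + c *: J) *m o^T = (c * n%:R) *: o^T.
      rewrite mulmxDl -!scalemxAl mulmxBl AoT mul_scalar_mx subrr scaler0 add0r.
      by rewrite JoT scalerA.
    have H1 : forall v : 'rV_n, v *m (a *: (A - r%:R%:M) + c *: J) = 0 ->
        v *m (A - r%:R%:M) = 0.
      move=> v hv.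
      have h1 : v *m o^T = 0.
        have := congr1 (mulmx^~ o^T) hv; rewrite mul0mx -mulmxA MoT -scalemxAr => /eqP.
        by rewrite scaler_eq0 mulf_eq0 (negbTE c0) (negbTE nR) => /eqP.
      have vJ : v *m J = 0 by rewrite /J J_eq mulmxA h1 mul0mx.
      move: hv; rewrite mulmxDr -!scalemxAr vJ scaler0 addr0 => /eqP.
      by rewrite scaler_eq0 (negbTE a0) => /eqP.
    have H2 : o *m (A - r%:R%:M) = 0 by rewrite mulmxBr oA mul_mx_scalar subrr.
    have H3 : o *m (a *: (A - r%:R%:M) + c *: J) != 0.
      rewrite mulmxDr -!scalemxAr H2 scaler0 add0r oJ scalerA scaler_eq0.
      by rewrite negb_or mulf_eq0 negb_or c0 nR one0.
    have := kerplus H1 H2 H3; rewrite EIG /= eqxx add1n.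
    have := cntle r%:R; rewrite /= eqxx add1n.
    have := hm r%:R.
    have := rank_leq_row (a *: (A - r%:R%:M) + c *: J).
    exact: natL1.
  have e1 : a *: (A - mu%:M) = (a *: (A - mu%:M) + c *: J) + - (c *: J).
    by rewrite addrK.
  have h := mxrank_add (a *: (A - mu%:M) + c *: J) (- (c *: J)).
  rewrite -e1 mxrank_scale_nz // EIG mxrank_opp in h.
  have hcJ : (\rank (c *: J) <= 1)%N := leq_trans (mxrank_scale _ _) rkJ.
  move: h; rewrite /= eq_sym (negbTE hmur) add0n.
  have := hm mu.
  move=> Hx Hy; exact: natL2 Hx hcJ Hy.
split; last by move=> a b c d a0; apply: lower.
have hmr : 1 * r%:R = - (- r%:R + 0 * r%:R) :> R.
  by rewrite mul0r addr0 opprK mul1r.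
case: (eqVneq ls [::]) => [lsE|lsne].
  exists 1, (- r%:R), 0, 0; split; first exact: oner_neq0.
  rewrite (univ_eq 0 hr hmr) scale0r addr0 scale1r EIG /= eqxx add1n.
  by rewrite /m lsE big_nil.
have [y yin ym] := exists_max (fun x => count_mem x ls) lsne.
rewrite /m ym.
case: (eqVneq y r%:R) => [yr|yr].
  exists 1, (- r%:R), 0, 0; split; first exact: oner_neq0.
  rewrite (univ_eq 0 hr hmr) scale0r addr0 scale1r EIG /= eqxx add1n yr.
  by rewrite addn1.
set c := (y - r%:R) / n%:R.
have hmu : 1 * y = - (- y + 0 * r%:R) by rewrite mul0r addr0 opprK mul1r.
exists 1, (- y), c, 0; split; first exact: oner_neq0.
have lw := lower 1 (- y) c 0 (oner_neq0 _).
rewrite /m ym (univ_eq c hr hmu) scale1r in lw.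
rewrite (univ_eq c hr hmu) scale1r.
apply/eqP; rewrite eqn_leq lw andbT.
have ry : r%:R != y by rewrite eq_sym.
have H1 : forall v : 'rV_n, v *m (A - y%:M) = 0 -> v *m (A - y%:M + c *: J) = 0.
  move=> v hv.
  have vA : v *m A = y *: v.
    by move: hv; rewrite mulmxBr mul_mx_scalar => /eqP; rewrite subr_eq0 => /eqP.
  have h1 : v *m o^T = 0.
    have : (r%:R - y) *: (v *m o^T) = 0.
      by rewrite scalerBl scalemxAr -AoT mulmxA vA -scalemxAl subrr.
    by move/eqP; rewrite scaler_eq0 subr_eq0 (negbTE ry) => /eqP.
  have vJ : v *m J = 0 by rewrite /J J_eq mulmxA h1 mul0mx.
  by rewrite mulmxDr -scalemxAr vJ scaler0 addr0 hv.
have H2 : o *m (A - y%:M + c *: J) = 0.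
  rewrite mulmxDr mulmxBr oA mul_mx_scalar -scalemxAr oJ scalerA -scalerBl -scalerDl.
  have -> : r%:R - y + c * n%:R = 0 by rewrite /c divfK //; ring.
  by rewrite scale0r.
have H3 : o *m (A - y%:M) != 0.
  by rewrite mulmxBr oA mul_mx_scalar -scalerBl scaler_eq0 negb_or subr_eq0 ry one0.
have := kerplus H1 H2 H3; rewrite EIG /= (negbTE ry) add0n.
have := cntle y; rewrite /= (negbTE ry) add0n.
have := rank_leq_row (A - y%:M + c *: J).
exact: natL3.
Qed.
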